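(* The VC-dimension of the edge relation on the Johnson graph $J(m,k)$ equals $4$ if and only if $1<k<m-1$ and $\binom{m}{k}\ge 16$.
   Context: For $m\ge k$ and a set $X$ with $|X|=m$, the Johnson graph $J(m,k)$ has as vertices the $k$-element subsets of $X$ (so it has $\binom mk$ vertices), two vertices adjacent iff their intersection has size $k-1$. The VC-dimension of the edge relation on a graph $G$ is the largest size of a set $A\subseteq V(G)$ such that $\{A\cap N(v)\mid v\in V(G)\}$ equals the power set of $A$, where $N(v)$ is the set of vertices adjacent to $v$. *)

(* Defs.v *)
From mathcomp Require Import all_boot.
Set Implicit Arguments. Unset Strict Implicit. Unset Printing Implicit Defensive.

Definition nbhd (V : finType) (e : rel V) (v : V) : {set V} := [set w | e v w].

Definition shattered (V : finType) (e : rel V) (A : {set V}) : bool :=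
  [forall B : {set V}, (B \subset A) ==> [exists v : V, A :&: nbhd e v == B]].

Definition vc_dim (V : finType) (e : rel V) : nat :=
  \max_(A : {set V} | shattered e A) #|A|.

Definition johnson_vertex (m k : nat) : Type := {A : {set 'I_m} | #|A| == k}.

(* Adjacency: intersection has size k-1 (written #|A :&: B| + 1 = k to avoid
   truncated subtraction when k = 0). *)
Definition johnson_adj (m k : nat) : rel (johnson_vertex m k) :=
  fun A B => #|val A :&: val B| + 1 == k.

(* Main.v *)
Require Import Defs.
From mathcomp Require Import all_boot zify.
Set Implicit Arguments. Unset Strict Implicit. Unset Printing Implicit Defensive.


Fixpoint eqbl (u w : seq bool) := match u, w with [::], [::] => true | a :: u', b :: w' => (if a then b else negb b) && eqbl u' w' | _, _ => false end.
Definition I6 := [:: 0; 1; 2; 3; 4; 5].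
Fixpoint eqv (l : seq nat) p := if l is x :: l' then eqn x p :: eqv l' p else [::].
Fixpoint zw (f : bool -> bool -> bool) (u w : seq bool) := match u, w with a :: u', b :: w' => f a b :: zw f u' w' | _, _ => [::] end.
Fixpoint ors (r : seq (seq bool)) := if r is u :: r' then [seq zw orb u w | w <- u :: r'] ++ ors r' else [::].
Definition traces lx ly :=
  let rx := [seq eqv lx p | p <- I6] in let ry := [seq eqv ly p | p <- I6] in
  [seq zw xorb u w | u <- rx, w <- ry] ++ [seq zw andb u w | u <- ors rx, w <- ors ry].
Fixpoint bl n : seq (seq bool) := if n is n'.+1 then [seq b :: s | b <- [:: true; false], s <- bl n'] else [:: [::]].
Definition subsets3 : seq (seq bool) := [seq s <- bl 5 | count id s == 3].
Definition I5 := iota 0 5.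
Definition canon l := all (fun i => (nth 0 l i <= i) && (nth 0 l (nth 0 l i) == nth 0 l i)) I5.
Definition injm lx ly := all (fun i => all (fun j => (nth 0 lx i == nth 0 lx j) ==> (nth 0 ly i == nth 0 ly j) ==> (i == j)) I5) I5.
Definition allL (P : seq nat -> bool) := all (fun b => all (fun c => all (fun d => all (fun e => P [:: 0; b; c; d; e]) (iota 0 5)) (iota 0 4)) (iota 0 3)) (iota 0 2).
Definition Check := allL (fun lx => if canon lx then allL (fun ly => if canon ly then (if injm lx ly then (let t := traces lx ly in has (fun S => ~~ has (eqbl S) t) subsets3) else true) else true) else true).
Lemma check_ok : Check. Proof. vm_compute. reflexivity. Qed.

Lemma eqblE u w : eqbl u w = (u == w).
Proof. by elim: u w => [|a u IH] [|b w] //=; rewrite IH; case: a; case: b. Qed.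

Lemma size_eqv l p : size (eqv l p) = size l.
Proof. by elim: l => //= x l ->. Qed.

Lemma eqv_nth l p i : i < size l -> nth false (eqv l p) i = (nth 0 l i == p).
Proof.
by elim: l i => [|x l IH] [|i] //= H; rewrite IH.
Qed.

Lemma size_zw f u w : size (zw f u w) = minn (size u) (size w).
Proof. by elim: u w => [|a u IH] [|b w] //=; rewrite IH minnSS. Qed.

Lemma zw_nth f u w i : i < size u -> i < size w ->
  nth false (zw f u w) i = f (nth false u i) (nth false w i).
Proof. by elim: u w i => [|a u IH] [|b w] [|i] //= H1 H2; rewrite IH. Qed.

Lemma zw_orC u w : zw orb u w = zw orb w u.
Proof. by elim: u w => [|a u IH] [|b w] //=; rewrite IH orbC. Qed.

Lemma ors_cons x r : ors (x :: r) = [seq zw orb x w | w <- x :: r] ++ ors r.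
Proof. by []. Qed.

Lemma ors_mem r u w : u \in r -> w \in r -> zw orb u w \in ors r.
Proof.
elim: r => [|x r IH] // ur wr; rewrite ors_cons mem_cat.
move: ur wr; rewrite [u \in _]in_cons [w \in _]in_cons.
case/orP => [/eqP -> | ur]; case/orP => [/eqP -> | wr].
- by apply/orP; left; apply: (map_f (zw orb x)); apply: mem_head.
- by apply/orP; left; apply: (map_f (zw orb x)); rewrite in_cons wr orbT.
- by apply/orP; left; rewrite zw_orC; apply: (map_f (zw orb x)); rewrite in_cons ur orbT.
- by rewrite IH ?orbT.
Qed.

Lemma bl_S n : bl n.+1 = [seq b :: s | b <- [:: true; false], s <- bl n].
Proof. by []. Qed.

Lemma bl_mem n b : size b = n -> b \in bl n.
Proof.
elim: n b => [|n IH] [|x b] // [H].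
rewrite bl_S.
by apply/allpairsP; exists (x, b); split => //; [case: x | apply: IH].
Qed.

Lemma allL_spec P l : allL P -> size l = 5 -> (forall i, i < 5 -> nth 0 l i <= i) -> P l.
Proof.
case: l => [|a [|b [|c [|d [|e [|]]]]]] // H _ Hle.
have a0 : a = 0 by have := Hle 0 isT; rewrite leqn0 => /eqP.
subst a.
have hb : b \in iota 0 2 by rewrite mem_iota; exact: (Hle 1 isT).
have hc : c \in iota 0 3 by rewrite mem_iota; exact: (Hle 2 isT).
have hd : d \in iota 0 4 by rewrite mem_iota; exact: (Hle 3 isT).
have he : e \in iota 0 5 by rewrite mem_iota; exact: (Hle 4 isT).
move: H; rewrite /allL => /allP /(_ b hb) H; cbv beta in H.
move: H => /allP /(_ c hc) H; cbv beta in H.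
move: H => /allP /(_ d hd) H; cbv beta in H.
move: H => /allP /(_ e he) H; cbv beta in H.
done.
Qed.

Section Index.
Variable T : eqType.
Variable s : seq T.
Hypothesis szs : size s = 5.
Let l := [seq index x s | x <- s].

Lemma size_l : size l = 5. Proof. by rewrite size_map. Qed.

Lemma nth_l x0 i : i < 5 -> nth 0 l i = index (nth x0 s i) s.
Proof. by move=> Hi; rewrite (nth_map x0) ?szs. Qed.

Lemma nth_l_le (x0 : T) i : i < 5 -> nth 0 l i <= i.
Proof. by move=> Hi; rewrite /l (nth_map x0) ?szs // index_nth ?szs. Qed.

Lemma idx_eq x y : x \in s -> (index x s == index y s) = (x == y).
Proof.
move=> xs; case: (x =P y) => [->|ne]; first by rewrite eqxx.
apply/negbTE/eqP => E; apply: ne.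
case ys: (y \in s); first by apply: (index_inj x xs ys).
move: E; rewrite (memNindex (negbT ys)) => E.
by move: (index_mem x s); rewrite xs E ltnn.
Qed.

Lemma canon_l (x0 : T) : canon l.
Proof.
apply/allP => i; rewrite mem_iota /= => Hi.
rewrite /l (nth_map x0) ?szs // index_nth ?szs //=.
rewrite (nth_map x0); last by rewrite index_mem mem_nth ?szs.
by rewrite nth_index ?mem_nth ?szs.
Qed.
End Index.

Lemma core (T1 T2 : eqType) (X : 'I_5 -> T1) (Y : 'I_5 -> T2)
  (inj : forall i j, X i = X j -> Y i = Y j -> i = j)
  (H : forall S : {set 'I_5}, S = setT \/ S = set0 \/
     (exists p q, forall i, (i \in S) = ((X i == p) != (Y i == q))) \/
     (exists p1 p2 q1 q2, forall i, (i \in S) =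
        (((X i == p1) || (X i == p2)) && ((Y i == q1) || (Y i == q2))))) : False.
Proof.
pose sX := [seq X i | i <- enum 'I_5]; pose sY := [seq Y i | i <- enum 'I_5].
have szX : size sX = 5 by rewrite size_map size_enum_ord.
have szY : size sY = 5 by rewrite size_map size_enum_ord.
pose lx := [seq index x sX | x <- sX]; pose ly := [seq index x sY | x <- sY].
have nX : forall i : 'I_5, nth 0 lx i = index (X i) sX.
  by move=> i; rewrite (nth_l szX (X i)) // (nth_map i) ?size_enum_ord // nth_ord_enum.
have nY : forall i : 'I_5, nth 0 ly i = index (Y i) sY.
  by move=> i; rewrite (nth_l szY (Y i)) // (nth_map i) ?size_enum_ord // nth_ord_enum.
have mX : forall i, X i \in sX by move=> i; rewrite map_f ?mem_enum.
have mY : forall i, Y i \in sY by move=> i; rewrite map_f ?mem_enum.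
have kX : forall (i : 'I_5) p, (nth 0 lx i == index p sX) = (X i == p).
  by move=> i p; rewrite nX idx_eq.
have kY : forall (i : 'I_5) p, (nth 0 ly i == index p sY) = (Y i == p).
  by move=> i p; rewrite nY idx_eq.
have cx : canon lx by apply: (canon_l szX (X ord0)).
have cy : canon ly by apply: (canon_l szY (Y ord0)).
have ij : injm lx ly.
  apply/allP => i; rewrite mem_iota add0n => /andP [_ Hi]; apply/allP => j; rewrite mem_iota add0n => /andP [_ Hj].
  change i with (nat_of_ord (Ordinal Hi)); change j with (nat_of_ord (Ordinal Hj)).
  rewrite !nX !nY !idx_eq //.
  by apply/implyP => /eqP E1; apply/implyP => /eqP E2; rewrite (inj _ _ E1 E2).
have := check_ok; rewrite /Check => /allL_spec /(_ (size_l szX) (nth_l_le szX (X ord0))).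
rewrite cx => /allL_spec /(_ (size_l szY) (nth_l_le szY (Y ord0))).
rewrite cy ij => H1; cbv beta iota in H1; move/hasP: H1 => [S S3 /negP HS].
have : all (fun S => (size S == 5) && has id S && has negb S) subsets3 by [].
move=> /allP /(_ S S3) /andP [/andP [/eqP szS hT] hF].
pose S' := [set i : 'I_5 | nth false S i].
have inS : forall i : 'I_5, (i \in S') = nth false S i by move=> i; rewrite inE.
have eqS : forall u, size u = 5 -> (forall i : 'I_5, nth false u i = (i \in S')) -> u \in traces lx ly -> False.
  move=> u szu Hu ut; apply: HS; apply/hasP; exists u => //; rewrite eqblE; apply/eqP.
  apply: (eq_from_nth (x0 := false)); first by rewrite szu szS.
  by rewrite szS => i Hi; rewrite (Hu (Ordinal Hi)) inS.
have lxs : size lx = 5 by apply: size_l.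
have lys : size ly = 5 by apply: size_l.
have inI6X : forall p, eqv lx (index p sX) \in [seq eqv lx p | p <- I6].
  by move=> p; apply: map_f; move: (index_size p sX); rewrite szX; case: (index p sX) => [|[|[|[|[|[|]]]]]].
have inI6Y : forall p, eqv ly (index p sY) \in [seq eqv ly p | p <- I6].
  by move=> p; apply: map_f; move: (index_size p sY); rewrite szY; case: (index p sY) => [|[|[|[|[|[|]]]]]].
case: (H S') => [ST | [S0 | [[p [q Hpq]] | [p1 [p2 [q1 [q2 Hb]]]]]]].
- move/has_nthP: hF => /(_ false) [i]; rewrite szS => Hi.
  by rewrite -(inS (Ordinal Hi)) ST inE.
- move/has_nthP: hT => /(_ false) [i]; rewrite szS => Hi.
  by rewrite -(inS (Ordinal Hi)) S0 inE.
- apply: (eqS (zw xorb (eqv lx (index p sX)) (eqv ly (index q sY)))).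
  + by rewrite size_zw !size_eqv lxs lys.
  + move=> i; rewrite zw_nth ?size_eqv ?lxs ?lys // !eqv_nth ?lxs ?lys //.
    by rewrite kX kY Hpq; case: (X i == p); case: (Y i == q).
  + by rewrite /traces mem_cat; apply/orP; left; apply: allpairs_f.
- apply: (eqS (zw andb (zw orb (eqv lx (index p1 sX)) (eqv lx (index p2 sX)))
                      (zw orb (eqv ly (index q1 sY)) (eqv ly (index q2 sY))))).
  + by rewrite !size_zw !size_eqv lxs lys.
  + move=> i; rewrite !zw_nth ?size_zw ?size_eqv ?lxs ?lys // !eqv_nth ?lxs ?lys //.
    by rewrite !kX !kY Hb.
  + by rewrite /traces mem_cat; apply/orP; right; apply: allpairs_f; apply: ors_mem.
Qed.

Lemma cardsI1' (T : finType) (w : {set T}) y : #|w :&: [set y]| = (y \in w).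
Proof.
case yw: (y \in w).
- by rewrite (setIidPr _) ?cards1 // sub1set.
- rewrite (_ : w :&: [set y] = set0) ?cards0 //; apply/setP => u; rewrite !inE.
  by apply/negP => /andP [uw /eqP uy]; rewrite -uy uw in yw.
Qed.

Lemma formula (T : finType) (v a w : {set T}) x y :
  v :\: a = [set x] -> a :\: v = [set y] ->
  #|w :&: a| + (x \in w) = #|w :&: v| + (y \in w).
Proof.
move=> Hx Hy.
have h1 := cardsID v (w :&: a); have h2 := cardsID a (w :&: v).
rewrite -setIDA Hy cardsI1' in h1; rewrite -setIDA Hx cardsI1' in h2.
rewrite setIAC in h2; lia.
Qed.

Lemma mem_aE (T : finType) (v a : {set T}) x y :
  v :\: a = [set x] -> a :\: v = [set y] ->
  forall u, (u \in a) = (if u \in v then u != x else u == y).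
Proof.
move=> /setP Hx /setP Hy u; case uv: (u \in v).
- by move: (Hx u); rewrite !inE uv andbT => <-; rewrite negbK.
- by move: (Hy u); rewrite !inE uv /=.
Qed.

Section J.
Variables m k : nat.
Local Notation V := (johnson_vertex m k).

Lemma card_v (u : V) : #|val u| = k.
Proof. by apply/eqP; apply: (valP u). Qed.

Lemma adjE (v w a : V) x y :
  val v :\: val a = [set x] -> val a :\: val v = [set y] ->
  johnson_adj w a = (#|val v :\: val w| + (x \notin val v :\: val w) == 1 + (y \in val w :\: val v)).
Proof.
move=> Hx Hy.
have xv : x \in val v by move/setP: Hx => /(_ x); rewrite !inE eqxx => /andP [].
have yv : y \notin val v by move/setP: Hy => /(_ y); rewrite !inE eqxx => /andP [].
have F := formula (val w) Hx Hy.
have ex : (x \notin val v :\: val w) = (x \in val w) by rewrite !inE xv andbT negbK.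
have ey : (y \in val w :\: val v) = (y \in val w) by rewrite !inE (negbTE yv).
rewrite /johnson_adj ex ey cardsD card_v (setIC (val v)).
have : #|val w :&: val v| <= k.
  by have := subset_leq_card (subsetIr (val w) (val v)); rewrite card_v.
move: F; case: (x \in val w); case: (y \in val w);
  move: #|val w :&: val a| #|val w :&: val v| => c s /= F H; apply/eqP/eqP; clear -F H; lia.
Qed.

Lemma adj_xy (v a : V) : johnson_adj v a ->
  exists xy : 'I_m * 'I_m, val v :\: val a = [set xy.1] /\ val a :\: val v = [set xy.2].
Proof.
rewrite /johnson_adj => /eqP H.
have : #|val v :\: val a| == 1 by rewrite cardsD card_v; apply/eqP; lia.
have : #|val a :\: val v| == 1 by rewrite cardsD card_v setIC; apply/eqP; lia.
by move=> /cards1P [y ->] /cards1P [x ->]; exists (x, y).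
Qed.

Lemma ub (A : {set V}) : shattered (@johnson_adj m k) A -> #|A| <= 4.
Proof.
move=> sh; rewrite leqNgt; apply/negP => H5.
have shB : forall B : {set V}, B \subset A -> exists w, A :&: nbhd (@johnson_adj m k) w = B.
  move=> B BA; move/forallP: sh => /(_ B); rewrite BA /= => /existsP [w /eqP Hw].
  by exists w.
have [a0 a0A] : exists a0, a0 \in A by apply/card_gt0P; lia.
pose s := enum A.
have szs : 5 <= size s by rewrite -cardE.
pose a (i : 'I_5) := nth a0 s i.
have aA : forall i, a i \in A.
  by move=> i; rewrite -mem_enum mem_nth //; apply: leq_trans szs.
have ainj : injective a.
  move=> i j /eqP; rewrite /a nth_uniq ?enum_uniq //; last 2 first.
  - by apply: leq_trans szs.
  - by apply: leq_trans szs.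
  by move=> /eqP; apply: val_inj.
have [v Hv] := shB A (subxx A).
have adjv : forall i, johnson_adj v (a i).
  by move=> i; move/setP: Hv => /(_ (a i)); rewrite !inE aA.
have [f Hf] := fin_all_exists (fun i => adj_xy (adjv i)).
pose X i := (f i).1; pose Y i := (f i).2.
apply: (core (X := X) (Y := Y)).
- move=> i j EX EY; apply: ainj; apply: val_inj; apply/setP => u.
  have [Hxi Hyi] := Hf i; have [Hxj Hyj] := Hf j.
  by rewrite (mem_aE Hxi Hyi) (mem_aE Hxj Hyj) -/(X i) -/(Y i) -/(X j) -/(Y j) EX EY.
- move=> S; cbv beta.
  have sub : [set a i | i in S] \subset A by apply/subsetP => u /imsetP [i _ ->]; apply: aA.
  have [w Hw] := shB _ sub.
  have inS : forall i, (i \in S) = johnson_adj w (a i).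
    move=> i; rewrite -(mem_imset _ _ ainj) -Hw !inE aA /=.
    by [].
  have adjw : forall i, johnson_adj w (a i) =
     (#|val v :\: val w| + (X i \notin val v :\: val w) == 1 + (Y i \in val w :\: val v)).
    by move=> i; have [Hx Hy] := Hf i; apply: adjE.
  have c2 : #|val w :\: val v| = #|val v :\: val w|.
    by rewrite !cardsD !card_v setIC.
  case Et: #|val v :\: val w| => [|[|[|t]]].
  + have E1 : val v :\: val w = set0 by apply/eqP; rewrite -cards_eq0 Et.
    have E2 : val w :\: val v = set0 by apply/eqP; rewrite -cards_eq0 c2 Et.
    by left; apply/setP => i; rewrite inS adjw E1 E2 cards0 !inE.
  + right; right; left.
    move/eqP: (Et) => /cards1P [p Ep]; rewrite Et in c2; move/eqP: c2 => /cards1P [q Eq].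
    exists p, q => i; rewrite inS adjw Ep Eq cards1 !inE.
    by case: (X i == p); case: (Y i == q).
  + right; right; right.
    move/eqP: (Et) => /cards2P [p1 [p2 [_ Ep]]]; rewrite Et in c2.
    move/eqP: c2 => /cards2P [q1 [q2 [_ Eq]]].
    exists p1, p2, q1, q2 => i; rewrite inS adjw Et Ep Eq !in_set2.
    by case: (_ || _); case: (_ || _).
  + right; left; apply/setP => i; rewrite inS adjw Et in_set0.
    by apply/negbTE/eqP; case: (_ \notin _); case: (_ \in _); lia.
Qed.
End J.


Definition adjm (c : nat * nat) (PQ : seq nat * seq nat) : bool :=
  size PQ.1 + (c.1 \notin PQ.1) == 1 + (c.2 \in PQ.2).
Definition okPQ nl nr (PQ : seq nat * seq nat) :=
  [&& uniq PQ.1, uniq PQ.2, size PQ.1 == size PQ.2, all (fun i => i < nl) PQ.1 & all (fun i => i < nr) PQ.2].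
Definition lbcheck nl nr (cells : seq (nat * nat)) (wits : seq (seq nat * seq nat)) :=
  [&& size cells == 4, all (fun c => (c.1 < nl) && (c.2 < nr)) cells, all (okPQ nl nr) wits &
      all (fun b => has (fun PQ => [seq adjm c PQ | c <- cells] == b) wits) (bl 4)].

Section Inord.
Variable m' : nat.
Lemma mem_map_inord s i : i <= m' -> all (fun j => j <= m') s ->
  ((inord i : 'I_m'.+1) \in map inord s) = (i \in s).
Proof.
move=> Hi Hs; apply/mapP/idP => [[j js E]|iS]; last by exists i.
have Hj : j <= m' by move/allP: Hs => /(_ j js).
by move: (congr1 (@nat_of_ord _) E); rewrite !inordK // => ->.
Qed.

Lemma card_map_inord s : uniq s -> all (fun j => j <= m') s ->
  #|[set x in (map inord s : seq 'I_m'.+1)]| = size s.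
Proof.
move=> us Hs; rewrite cardsE; apply/eqP; rewrite -(size_map (inord : nat -> 'I_m'.+1)).
apply/eqP/card_uniqP; rewrite map_inj_in_uniq // => i j iS js /(congr1 (@nat_of_ord _)).
by rewrite !inordK //; [move/allP: Hs => /(_ j js) | move/allP: Hs => /(_ i iS)].
Qed.
End Inord.

Lemma lb m k nl nr cells wits : lbcheck nl nr cells wits -> nl <= k -> k + nr <= m ->
  exists A : {set johnson_vertex m k}, shattered (@johnson_adj m k) A /\ #|A| = 4.
Proof.
case/and4P => /eqP szc /allP cellsOK /allP witsOK /allP allb Hnl Hnr.
have [c0 c0in] : exists c, c \in cells by case: cells szc {cellsOK allb} => // c s _; exists c; apply: mem_head.
have nr0 : 0 < nr by have /andP [_ H] := cellsOK c0 c0in; lia.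
case: m Hnr => [|m'] Hnr; first by lia.
pose L (i : nat) : 'I_m'.+1 := inord i.
pose R (i : nat) : 'I_m'.+1 := inord (k + i).
pose vset := [set x in map L (iota 0 k)].
have allv : all (fun j => j <= m') (iota 0 k).
  by apply/allP => j; rewrite mem_iota; lia.
have cardv : #|vset| = k by rewrite card_map_inord ?iota_uniq // size_iota.
pose v0 : johnson_vertex m'.+1 k := exist _ vset (introT eqP cardv).
pose mkV (S : {set 'I_m'.+1}) : johnson_vertex m'.+1 k := insubd v0 S.
have mkVK : forall S : {set 'I_m'.+1}, #|S| = k -> val (mkV S) = S.
  by move=> S HS; rewrite /mkV insubdK //; apply/eqP.
have Lv : forall i, i < k -> L i \in vset.
  by move=> i Hi; rewrite inE mem_map_inord ?mem_iota //; lia.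
have Rv : forall i, i < nr -> R i \notin vset.
  by move=> i Hi; rewrite inE mem_map_inord ?mem_iota //; lia.
have km : k <= m' by lia.
pose Pset (Ps : seq nat) := [set x in map L Ps].
pose Qset (Qs : seq nat) := [set x in map R Qs].
have QE : forall Qs, map R Qs = map inord (map (addn k) Qs) by move=> Qs; rewrite -map_comp.
pose wset (PQ : seq nat * seq nat) := (vset :\: Pset PQ.1) :|: Qset PQ.2.
have okP : forall PQ, okPQ nl nr PQ -> all (fun j => j <= m') PQ.1.
  move=> PQ /and5P [_ _ _ /allP H _]; apply/allP => j /H; lia.
have okQ : forall PQ, okPQ nl nr PQ -> all (fun j => j <= m') (map (addn k) PQ.2).
  move=> PQ /and5P [_ _ _ _ /allP H]; apply/allP => j /mapP [i /H Hi ->]; lia.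
have memP : forall PQ i, okPQ nl nr PQ -> i < k -> (L i \in Pset PQ.1) = (i \in PQ.1).
  by move=> PQ i ok Hi; rewrite inE mem_map_inord //; [lia | apply: okP].
have memQ : forall PQ i, okPQ nl nr PQ -> i < nr -> (R i \in Qset PQ.2) = (i \in PQ.2).
  move=> PQ i ok Hi; rewrite inE QE mem_map_inord //; [|lia| by apply: okQ].
  by rewrite mem_map //; apply: addnI.
have Psub : forall PQ, okPQ nl nr PQ -> Pset PQ.1 \subset vset.
  move=> PQ ok; apply/subsetP => u; rewrite inE => /mapP [i iP ->]; apply: Lv.
  by case/and5P: ok => _ _ _ /allP /(_ i iP) H _; lia.
have Qdis : forall PQ u, okPQ nl nr PQ -> u \in Qset PQ.2 -> u \notin vset.
  move=> PQ u ok; rewrite inE => /mapP [i iQ ->]; apply: Rv.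
  by case/and5P: ok => _ _ _ _ /allP /(_ i iQ).
have cardP : forall PQ, okPQ nl nr PQ -> #|Pset PQ.1| = size PQ.1.
  by move=> PQ ok; rewrite card_map_inord //; [case/and5P: ok | apply: okP].
have cardQ : forall PQ, okPQ nl nr PQ -> #|Qset PQ.2| = size PQ.2.
  move=> PQ ok; rewrite /Qset QE card_map_inord ?size_map //; last by apply: okQ.
  by rewrite map_inj_uniq; [case/and5P: ok | apply: addnI].
have vw : forall PQ, okPQ nl nr PQ -> vset :\: wset PQ = Pset PQ.1.
  move=> PQ ok; apply/setP => u; rewrite in_setD in_setU in_setD.
  case uQ: (u \in Qset PQ.2).
    rewrite orbT /=; apply/esym/negbTE/negP => /(subsetP (Psub _ ok)).
    by rewrite (negbTE (Qdis _ _ ok uQ)).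
  rewrite orbF; case uP: (u \in Pset PQ.1) => /=; first by rewrite (subsetP (Psub _ ok)).
  by case: (u \in vset).
have wv : forall PQ, okPQ nl nr PQ -> wset PQ :\: vset = Qset PQ.2.
  move=> PQ ok; apply/setP => u; rewrite in_setD in_setU in_setD.
  case uQ: (u \in Qset PQ.2); first by rewrite (Qdis _ _ ok uQ) orbT.
  by rewrite orbF; case: (u \in vset); rewrite ?andbF.
have cardw : forall PQ, okPQ nl nr PQ -> #|wset PQ| = k.
  move=> PQ ok.
  have D : (vset :\: Pset PQ.1) :&: Qset PQ.2 = set0.
    apply/setP => u; rewrite in_setI in_setD in_set0; apply/negP => /andP [/andP [_ uv] uQ].
    by rewrite (negbTE (Qdis _ _ ok uQ)) in uv.
  have : size PQ.1 <= k by rewrite -cardP // -cardv; apply/subset_leq_card/Psub.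
  rewrite /wset cardsU D cards0 cardsDS ?Psub // cardP // cardQ // cardv.
  by case/and5P: ok => _ _ /eqP <- _ _; lia.
pose aset (c : nat * nat) := wset ([:: c.1], [:: c.2]).
have okc : forall c, c \in cells -> okPQ nl nr ([:: c.1], [:: c.2]).
  by move=> c /cellsOK /andP [H1 H2]; rewrite /okPQ /= H1 H2.
have adjG : forall c PQ, c \in cells -> PQ \in wits ->
    johnson_adj (mkV (wset PQ)) (mkV (aset c)) = adjm c PQ.
  move=> c PQ cin PQin.
  have okPQ' := witsOK PQ PQin; have okc' := okc c cin.
  have [c1 c2] : c.1 < nl /\ c.2 < nr by apply/andP/cellsOK.
  have E1 : val v0 :\: val (mkV (aset c)) = [set L c.1].
    rewrite mkVK ?cardw //= vw //; apply/setP => u; rewrite !inE.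
    by case: (u == L c.1); rewrite ?orbF.
  have E2 : val (mkV (aset c)) :\: val v0 = [set R c.2].
    rewrite mkVK ?cardw //= wv //; apply/setP => u; rewrite !inE.
    by case: (u == R c.2); rewrite ?orbF.
  rewrite (adjE _ E1 E2) /= mkVK ?cardw // vw // wv // cardP // memP ?memQ //; exact: leq_trans c1 Hnl.
pose g (c : nat * nat) := mkV (aset c).
pose A := [set x in map g cells].
exists A; split.
- apply/forallP => B; apply/implyP => BA; apply/existsP.
  pose b := [seq g c \in B | c <- cells].
  have bin : b \in bl 4 by apply: bl_mem; rewrite size_map szc.
  have /hasP [PQ PQin /eqP Hb] := allb b bin.
  exists (mkV (wset PQ)); apply/eqP/setP => u; rewrite !inE.
  case uA: (u \in map g cells); last first.
    by apply/esym/negbTE/negP => /(subsetP BA); rewrite inE uA.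
  case/mapP: uA => c cin ->; rewrite /= adjG //.
  by move/eq_in_map: Hb => /(_ c cin).
- rewrite cardsE; apply/eqP; rewrite -szc -(size_map g); apply/eqP/card_uniqP.
  apply/(uniqP (g c0)) => i j; rewrite !inE size_map szc => Hi Hj Eij.
  pose b := [seq l == i | l <- iota 0 4].
  have bin : b \in bl 4 by apply: bl_mem; rewrite size_map size_iota.
  have /hasP [PQ PQin /eqP Hb] := allb b bin.
  have ci : nth c0 cells i \in cells by rewrite mem_nth ?szc.
  have cj : nth c0 cells j \in cells by rewrite mem_nth ?szc.
  move: Eij; rewrite !(nth_map c0) ?szc // => Eij.
  have := congr1 (fun l => nth false l i) Hb; have := congr1 (fun l => nth false l j) Hb.
  rewrite !(nth_map c0) ?szc // !(nth_map 0) ?size_iota // !nth_iota // !add0n eqxx.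
  rewrite -(adjG _ _ ci PQin) -(adjG _ _ cj PQin) -/(g (nth c0 cells i)) -/(g (nth c0 cells j)) Eij.
  by move=> -> /eqP ->.
Qed.


Lemma C1_ok : lbcheck 2 5 [:: (0, 0); (0, 1); (0, 2); (0, 3)] [:: ([::], [::]); ([:: 0], [:: 0]); ([:: 0], [:: 1]); ([:: 0], [:: 2]); ([:: 0], [:: 3]); ([:: 1], [:: 0]); ([:: 1], [:: 1]); ([:: 1], [:: 2]); ([:: 1], [:: 3]); ([:: 1], [:: 4]); ([:: 0; 1], [:: 0; 1]); ([:: 0; 1], [:: 0; 2]); ([:: 0; 1], [:: 0; 3]); ([:: 0; 1], [:: 1; 2]); ([:: 0; 1], [:: 1; 3]); ([:: 0; 1], [:: 2; 3])].
Proof. by vm_compute. Qed.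

Lemma C2_ok : lbcheck 3 3 [:: (0, 0); (0, 1); (1, 0); (1, 2)] [:: ([::], [::]); ([:: 0], [:: 0]); ([:: 0], [:: 1]); ([:: 0], [:: 2]); ([:: 1], [:: 0]); ([:: 1], [:: 1]); ([:: 1], [:: 2]); ([:: 2], [:: 0]); ([:: 2], [:: 1]); ([:: 2], [:: 2]); ([:: 0; 1], [:: 0; 1]); ([:: 0; 1], [:: 0; 2]); ([:: 0; 1], [:: 1; 2]); ([:: 0; 2], [:: 0; 1]); ([:: 1; 2], [:: 0; 2]); ([:: 0; 1; 2], [:: 0; 1; 2])].
Proof. by vm_compute. Qed.

Lemma C3_ok : lbcheck 5 2 [:: (0, 0); (1, 0); (2, 0); (3, 0)] [:: ([::], [::]); ([:: 0], [:: 0]); ([:: 0], [:: 1]); ([:: 1], [:: 0]); ([:: 1], [:: 1]); ([:: 2], [:: 0]); ([:: 2], [:: 1]); ([:: 3], [:: 0]); ([:: 3], [:: 1]); ([:: 4], [:: 1]); ([:: 0; 1], [:: 0; 1]); ([:: 0; 2], [:: 0; 1]); ([:: 0; 3], [:: 0; 1]); ([:: 1; 2], [:: 0; 1]); ([:: 1; 3], [:: 0; 1]); ([:: 2; 3], [:: 0; 1])].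
Proof. by vm_compute. Qed.

Lemma cardV m k : #|{: johnson_vertex m k}| = 'C(m, k).
Proof. by rewrite /johnson_vertex card_sig -cardsE card_draws card_ord. Qed.

Lemma D2 m k (A : {set johnson_vertex m k}) :
  shattered (@johnson_adj m k) A -> 2 ^ #|A| <= 'C(m, k).
Proof.
move=> sh.
have shB : forall B : {set johnson_vertex m k}, B \subset A ->
    exists w, A :&: nbhd (@johnson_adj m k) w = B.
  move=> B BA; move/forallP: sh => /(_ B); rewrite BA /= => /existsP [w /eqP Hw].
  by exists w.
have [v0 _] := shB set0 (sub0set A).
have : forall B : {set johnson_vertex m k}, exists w,
    B \subset A -> A :&: nbhd (@johnson_adj m k) w = B.
  move=> B; case BA: (B \subset A); last by exists v0.
  by have [w Hw] := shB B BA; exists w.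
case/fin_all_exists => f Hf.
rewrite -card_powerset -cardV -(card_in_imset (f := f)); first by apply: max_card.
move=> B1 B2; rewrite !inE => H1 H2 E.
by rewrite -(Hf _ H1) -(Hf _ H2) E.
Qed.

Lemma inter_lt m k (u w : johnson_vertex m k) : u != w -> #|val u :&: val w| < k.
Proof.
move=> uw; rewrite ltn_neqAle.
have := subset_leq_card (subsetIl (val u) (val w)); rewrite card_v => ->.
rewrite andbT; apply/negP => /eqP E; move/negP: uw; apply; apply/eqP/val_inj.
have E1 : val u :&: val w = val u.
  by apply/eqP; rewrite eqEcard subsetIl E card_v leqnn.
have E2 : val u :&: val w = val w.
  by apply/eqP; rewrite eqEcard subsetIr E card_v leqnn.
by rewrite -[LHS]E1 E2.
Qed.

Lemma complete m k : (k == 1) || (k.+1 == m) ->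
  forall u w : johnson_vertex m k, johnson_adj u w = (u != w).
Proof.
move=> Hk u w; rewrite /johnson_adj.
case: (u =P w) => [<- | /eqP uw] /=.
  by rewrite setIid card_v; apply/negbTE; rewrite addn1 neq_ltn ltnSn orbT.
have := inter_lt uw; have := cardsUI (val u) (val w); rewrite !card_v.
have := max_card (mem (val u :|: val w)); rewrite card_ord.
move: #|_ :|: _| #|_ :&: _| Hk => a b Hk H1 H2 H3; apply/eqP; clear -Hk H1 H2 H3.
by case/orP: Hk => /eqP Hk; lia.
Qed.

Lemma D1 m k (A : {set johnson_vertex m k}) :
  (forall u w : johnson_vertex m k, johnson_adj u w = (u != w)) ->
  shattered (@johnson_adj m k) A -> #|A| <= 1.
Proof.
move=> Hc sh; rewrite leqNgt; apply/negP => /card_gt1P [a [b [aA bA ab]]].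
move/forallP: sh => /(_ set0); rewrite sub0set /= => /existsP [w /eqP Hw].
have na : forall x, x \in A -> w = x.
  move=> x xA; move/setP: Hw => /(_ x); rewrite !inE xA Hc /=.
  by move/negbT; rewrite negbK => /eqP.
by move/negP: ab; apply; rewrite -(na _ aA) -(na _ bA).
Qed.

Lemma small_C m : m <= 6 -> 'C(m, 2) < 16.
Proof. by case: m => [|[|[|[|[|[|[|]]]]]]]. Qed.

Theorem mainTheorem8 (m k : nat) (hkm : k <= m) :
  vc_dim (@johnson_adj m k) = 4 <-> (1 < k /\ k < m - 1 /\ 16 <= 'C(m, k)).
Proof.
rewrite /vc_dim; split.
- move=> Hvc.
  have [A shA cA] : exists2 A : {set johnson_vertex m k}, shattered (@johnson_adj m k) A & #|A| = 4.
    case: (pickP (shattered (@johnson_adj m k))) => [A0 sh0 | none].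
      have pos : 0 < #|shattered (@johnson_adj m k)| by apply/card_gt0P; exists A0.
      have [A shA EA] := eq_bigmax_cond (fun A : {set johnson_vertex m k} => #|A|) pos.
      by exists A => //; rewrite -EA.
    by move: Hvc; rewrite big_pred0.
  have HC := D2 shA; rewrite cA in HC.
  have k1 : k != 1.
    apply/negP => /eqP k1; have := D1 (complete (introT orP (or_introl (introT eqP k1)))) shA.
    by rewrite cA.
  have km1 : k.+1 != m.
    apply/negP => /eqP km1; have := D1 (complete (introT orP (or_intror (introT eqP km1)))) shA.
    by rewrite cA.
  have k0 : k != 0 by apply/negP => /eqP k0; move: HC; rewrite k0 bin0.
  have km : k != m by apply/negP => /eqP km; move: HC; rewrite km binn.
  by split; [| split]; lia.
- move=> [hk1 [hkm1 hC]]; apply/eqP; rewrite eqn_leq; apply/andP; split.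
    by apply/bigmax_leqP => A; apply: ub.
  suff [A [shA cA]] : exists A : {set johnson_vertex m k}, shattered (@johnson_adj m k) A /\ #|A| = 4.
    by rewrite -cA; apply: (@leq_bigmax_cond _ (fun A0 => shattered (@johnson_adj m k) A0) (fun A0 => #|A0|) A shA).
  case: (boolP ((3 <= k) && (k + 3 <= m))) => [/andP [h1 h2] | hn].
    by apply: (lb C2_ok).
  case: (boolP (k == 2)) => [/eqP k2 | kn2].
    have m7 : 7 <= m.
      rewrite ltnNge; apply/negP => m6; have := small_C m6.
      by move: hC; rewrite k2 => hC H; move: (leq_ltn_trans hC H).
    by apply: (lb C1_ok); clear -k2 m7; lia.
  have k2 : k = m - 2 by move: hn kn2 hk1 hkm1; clear; lia.
  have m2 : 2 <= m by clear -hk1 hkm1; lia.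
  have m7 : 7 <= m.
    rewrite ltnNge; apply/negP => m6; have := small_C m6.
    by move: hC; rewrite k2 (bin_sub m2) => hC H; move: (leq_ltn_trans hC H).
  by apply: (lb C3_ok); clear -k2 m7; lia.
Qed.
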